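(* Let $(J,\mu)$ be a standard Borel space with a finite Borel measure $\mu$, and let $\mathcal{I}$ be a family of Borel subsets of $J$ satisfying: (I0) $\mathcal{I}$ is closed under taking (Borel) subsets; (I1) if $I_1\subseteq I_2\subseteq\cdots$ with $I_n\in\mathcal{I}$ for all $n$, then $\bigcup_n I_n\in\mathcal{I}$; (I2) for all $I_1,I_2\in\mathcal{I}$ with $\mu(I_1)<\mu(I_2)$ there exists $I_3\in\mathcal{I}$ with $I_1\subseteq I_3\subseteq I_1\cup I_2$ and $\mu(I_3)>\mu(I_1)$. Define $r(A)=\sup\{\mu(I): I\in\mathcal{I},\ I\subseteq A\}$ for Borel $A\subseteq J$. Then $r$ is submodular: $r(A)+r(B)\ge r(A\cap B)+r(A\cup B)$ for all Borel $A,B\subseteq J$. *)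

(* Defs.v *)
From HB Require Import structures.
From mathcomp Require Import all_boot all_order all_algebra.
From mathcomp Require Import all_classical all_reals all_analysis.
Set Implicit Arguments. Unset Strict Implicit. Unset Printing Implicit Defensive.
Import Order.TTheory GRing.Theory Num.Theory.
Local Open Scope classical_set_scope.
Local Open Scope ring_scope.

Definition is_metric (R : realType) (T : Type) (dist : T -> T -> R) : Prop :=
  (forall x y, 0 <= dist x y) /\
  (forall x y, dist x y = 0 <-> x = y) /\
  (forall x y, dist x y = dist y x) /\
  (forall x y z, dist x z <= dist x y + dist y z).

Definition metric_open (R : realType) (T : Type) (dist : T -> T -> R)
  (U : set T) : Prop :=
  forall x, U x -> exists2 e : R, 0 < e & [set y | dist x y < e] `<=` U.

Definition metric_complete (R : realType) (T : Type) (dist : T -> T -> R) : Prop :=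
  forall u : nat -> T,
    (forall e : R, 0 < e -> exists N : nat, forall n m, (N <= n)%N -> (N <= m)%N ->
        dist (u n) (u m) < e) ->
    exists l : T, forall e : R, 0 < e -> exists N : nat, forall n, (N <= n)%N ->
        dist (u n) l < e.

Definition metric_separable (R : realType) (T : Type) (dist : T -> T -> R) : Prop :=
  exists D : set T, countable D /\
    forall x (e : R), 0 < e -> exists2 y, D y & dist x y < e.

Definition standard_borel (R : realType) (d : measure_display)
  (T : measurableType d) : Prop :=
  exists dist : T -> T -> R,
    [/\ is_metric dist, metric_complete dist, metric_separable dist &
        (@measurable d T) = <<s metric_open dist >>].

Definition rank_fun (R : realType) (d : measure_display) (T : measurableType d)
  (mu : set T -> \bar R) (Ifam : set (set T)) (A : set T) : \bar R :=
  ereal_sup [set mu I | I in [set I | Ifam I /\ I `<=` A]].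

(* Main.v *)
Require Import Defs.
From HB Require Import structures.
From mathcomp Require Import all_boot all_order all_algebra.
From mathcomp Require Import all_classical all_reals all_analysis.
Import Order.TTheory GRing.Theory Num.Theory.
Local Open Scope classical_set_scope.
Local Open Scope ring_scope.
From mathcomp Require Import lra.
Lemma small_le (R : realType) (a b : R) :
  (forall n : nat, a <= b + n.+1%:R^-1) -> a <= b.
Proof.
move=> H; rewrite leNgt; apply/negP => ab.
have hp : 0 < a - b by rewrite subr_gt0.
have := truncnS_gt (a - b)^-1.
set N := (Num.truncn _).+1.
move=> hN.
have N0 : 0 < N%:R :> R by rewrite ltr0n.
have : N%:R^-1 < a - b.
  rewrite -(invrK (a - b)) ltf_pV2 ?posrE ?invr_gt0 //.
have := H (Num.truncn (a - b)^-1); rewrite -/N. lra.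
Qed.

Lemma extend (R : realType) (d : measure_display) (J : measurableType d)
  (mu : {finite_measure set J -> \bar R}) (Ifam : set (set J)) :
  (forall I, Ifam I -> measurable I) ->
  (forall F : nat -> set J, (forall n, Ifam (F n)) ->
     (forall n m, (n <= m)%N -> F n `<=` F m) -> Ifam (\bigcup_n F n)) ->
  (forall I1 I2, Ifam I1 -> Ifam I2 -> (mu I1 < mu I2)%E ->
     exists I3, [/\ Ifam I3, I1 `<=` I3, I3 `<=` I1 `|` I2 & (mu I1 < mu I3)%E]) ->
  forall C I, measurable C -> Ifam I -> I `<=` C ->
  exists U, [/\ Ifam U, I `<=` U, U `<=` C & mu U = rank_fun mu Ifam C].
Proof.
move=> Hm I2 I1 C I mC HI IC.
have muf : forall K, measurable K -> mu K = (fine (mu K))%:E.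
  by move=> K mK; rewrite fineK // fin_num_measure.
pose s K := ereal_sup [set mu L | L in [set L | Ifam L /\ K `<=` L /\ L `<=` C]].
have sfin : forall K, Ifam K -> K `<=` C -> s K \is a fin_num.
  move=> K IK KC; rewrite ge0_fin_numE.
    apply: (le_lt_trans (y := mu setT)).
      apply: ge_ereal_sup => _ [L [IL _] <-].
      apply: le_measure; rewrite ?inE; [exact: Hm|exact: measurableT|by []].
    by rewrite (muf _ measurableT) ltry.
  apply: (@le_trans _ _ (mu K)); first exact: measure_ge0.
  by apply: ereal_sup_ubound; exists K => //; split => //; split.
have step : forall (n : nat) K, exists K', (Ifam K /\ K `<=` C) ->
   [/\ Ifam K', K `<=` K', K' `<=` C & (s K - (n.+1%:R^-1)%:E < mu K')%E].
  move=> n K; case: (pselect (Ifam K /\ K `<=` C)) => [[IK KC]|]; last first.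
    by move=> h; exists K => /h.
  have : (s K - (n.+1%:R^-1)%:E < s K)%E.
    rewrite -(fineK (sfin _ IK KC)) -EFinD lte_fin.
    have : 0 < n.+1%:R^-1 :> R by rewrite invr_gt0 ltr0n.
    by move=> h; rewrite ltrBlDr ltrDl.
  move=> /ereal_sup_gt [_ [L [IL [KL LC]] <-] lt].
  by exists L.
have [f Hf] := @choice (nat * set J) (set J) (fun nK y => (Ifam nK.2 /\ nK.2 `<=` C) ->
   [/\ Ifam y, nK.2 `<=` y, y `<=` C & (s nK.2 - (nK.1.+1%:R^-1)%:E < mu y)%E])
  (fun nK => step nK.1 nK.2).
pose F := nat_rect (fun _ => set J) I (fun m K => f (m, K)).
have inv : forall n, Ifam (F n) /\ F n `<=` C.
  elim=> [|n [IH1 IH2]] //=.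
  by have [] := Hf (n, F n) (conj IH1 IH2).
have Fs : forall n, [/\ F n `<=` F n.+1 &
      (s (F n) - (n.+1%:R^-1)%:E < mu (F n.+1))%E].
  move=> n; have [IH1 IH2] := inv n.
  by have [] := Hf (n, F n) (conj IH1 IH2).
have mono : forall n m, (n <= m)%N -> F n `<=` F m.
  apply: homo_leq.
  - by move=> ?.
  - by move=> B A D AB BD; apply: subset_trans AB BD.
  - by move=> n; case: (Fs n).
pose U := \bigcup_n F n.
have IU : Ifam U by apply: I2 => // n; case: (inv n).
have UC : U `<=` C by move=> x [n _]; case: (inv n) => _; apply.
have IsU : I `<=` U by move=> x Ix; exists 0%N.
exists U; split => //.
apply/eqP; rewrite eq_le; apply/andP; split.
  by apply: ereal_sup_ubound; exists U.
rewrite leNgt; apply/negP => /ereal_sup_gt [_ [K [IK KC] <-] lt].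
have [I3 [II3 UI3 I3U lt3]] := I1 U K IU IK lt.
have : (mu I3 <= mu U)%E.
  rewrite (muf _ (Hm _ II3)) (muf _ (Hm _ IU)) lee_fin.
  apply: small_le => n.
  rewrite -lee_fin EFinD -(muf _ (Hm _ II3)) -(muf _ (Hm _ IU)).
  have h1 : (mu I3 <= s (F n))%E.
    apply: ereal_sup_ubound; exists I3 => //; split => //; split.
      by move=> x Fx; apply: UI3; exists n.
    by move=> x /I3U [/UC|/KC].

  have [_ h2] := Fs n.
  have h3 : (mu (F n.+1) <= mu U)%E.
    by apply: le_measure; rewrite ?inE; [apply: Hm; case: (inv n.+1)|apply: Hm|
       move=> x Fx; exists n.+1].
  have [IFn FnC] := inv n.
  move: (sfin _ IFn FnC) h1 h2 h3.
  rewrite (muf _ (Hm _ II3)) (muf _ (Hm _ IU)).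
  have [IFn1 _] := inv n.+1.
  rewrite (muf _ (Hm _ IFn1)).
  move=> /fineK <-; rewrite !lee_fin -EFinD lte_fin.
  set a := fine _; set b := fine _; set c := fine _; set e := fine _.
  set q := n.+1%:R^-1; lra.
by rewrite leNgt lt3.
Qed.

Theorem lemma4p11 (R : realType) (d : measure_display) (J : measurableType d)
  (mu : {finite_measure set J -> \bar R}) (Ifam : set (set J)) :
  standard_borel R J ->
  (forall I, Ifam I -> measurable I) ->
  (* (I0) *)
  (forall I A, Ifam I -> measurable A -> A `<=` I -> Ifam A) ->
  (* (I1) *)
  (forall F : nat -> set J, (forall n, Ifam (F n)) ->
     (forall n m, (n <= m)%N -> F n `<=` F m) -> Ifam (\bigcup_n F n)) ->
  (* (I2) *)
  (forall I1 I2, Ifam I1 -> Ifam I2 -> (mu I1 < mu I2)%E ->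
     exists I3, [/\ Ifam I3, I1 `<=` I3, I3 `<=` I1 `|` I2 & (mu I1 < mu I3)%E]) ->
  forall A B : set J, measurable A -> measurable B ->
    (rank_fun mu Ifam (A `&` B) + rank_fun mu Ifam (A `|` B)
       <= rank_fun mu Ifam A + rank_fun mu Ifam B)%E.
Proof.
move=> _ Hm H0 H1 H2 A B mA mB.
have muf : forall K, measurable K -> mu K = (fine (mu K))%:E.
  by move=> K mK; rewrite fineK // fin_num_measure.
case: (pselect (exists I, Ifam I)) => [[I0 HI0]|nI]; last first.
  have E : forall C, rank_fun mu Ifam C = -oo%E.
    move=> C; rewrite /rank_fun.
    have -> : [set mu I | I in [set I | Ifam I /\ I `<=` C]] = set0.
      by apply/seteqP; split => // y [I [II _] _]; apply: nI; exists I.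
    exact: ereal_sup0.
  by rewrite !E.
have I00 : Ifam set0 by apply: (H0 I0).
have [IB [IIB _ IBC muIB]] := @extend _ _ _ mu _ Hm H1 H2 _ _ (measurableI _ _ mA mB) I00 (sub0set _).
have IBC' : IB `<=` A `|` B by move=> x /IBC [xa _]; left.
have [U [IU IBU UC muU]] := @extend _ _ _ mu _ Hm H1 H2 _ _ (measurableU _ _ mA mB) IIB IBC'.
rewrite -muIB -muU.
have mU := Hm _ IU.
have mUA := measurableI _ _ mU mA.
have mUB := measurableI _ _ mU mB.
have hA : (mu (U `&` A) <= rank_fun mu Ifam A)%E.
  by apply: ereal_sup_ubound; exists (U `&` A) => //; split;
    [exact: (H0 U) | exact: subIsetr].
have hB : (mu (U `&` B) <= rank_fun mu Ifam B)%E.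
  by apply: ereal_sup_ubound; exists (U `&` B) => //; split;
    [exact: (H0 U) | exact: subIsetr].
have eU : U = (U `&` A) `|` (U `&` B) by rewrite -setIUr; apply/esym/setIidl.
have mUAB := measurableI _ _ mUA mUB.
have hI : (mu IB <= mu ((U `&` A) `&` (U `&` B)))%E.
  apply: le_measure; rewrite ?inE //; first exact: Hm.
  by move=> x xI; have [xa xb] := IBC _ xI; have xU := IBU _ xI.
have fA : (mu (U `&` A) < +oo)%E by rewrite (muf _ mUA) ltry.
rewrite {1}eU (measureUfinl mUA mUB fA).
apply: le_trans (leeD hA hB).
move: hI; rewrite (muf _ (Hm _ IIB)) (muf _ mUA) (muf _ mUB) (muf _ mUAB).
rewrite [X in (_ + (X + _ - _))%E]muf // [X in (_ + (_ + X - _))%E]muf // [X in (_ + (_ + _ - X))%E]muf //.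
rewrite -EFinB -!EFinD !lee_fin.
set a := fine _; set b := fine _; set c := fine _; set e := fine _.
lra.
Qed.
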